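(* Let $(G,k)$ be an instance, let $V_{\mathrm{ld}}$ be the set of large-dense vertices, let $X$ be a feasible solution, and let $P\subseteq V_{\mathrm{ld}}$ be a vertex triple $(v_1,v_2,v_3)$ inducing $P_3$. Then $X\cap P\neq\emptyset$.
   Context: Graphs are undirected, without self-loops, possibly with multi-edges. $N(v)$ is the set of vertices adjacent to $v$; $\rho(v)$ is the number of unordered pairs $\{u_1,u_2\}\subseteq N(v)$ joined by at least one edge. A vertex $v$ is large-dense if $|N(v)|>7k$ and $\rho(v)> |N(v)|(|N(v)|-1)/4$. A triple of distinct vertices $(v_1,v_2,v_3)$ induces $P_3$ if $v_1v_2$ and $v_2v_3$ are edges (possibly multi-edges) and $v_1v_3$ is not an edge. A vertex set induces a clique if between any two distinct vertices there is exactly one edge, and a tree if it is connected and acyclic (two parallel edges form a cycle). A feasible solution is $X\subseteq V$, $|X|\le k$, with every component of $G-X$ a clique or a tree. *)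

(* Defs.v *)
(* A multigraph on a finite vertex type T is given by an
   edge-multiplicity function m : T -> T -> nat (number of parallel edges). *)
From mathcomp Require Import all_boot.

Set Implicit Arguments. Unset Strict Implicit. Unset Printing Implicit Defensive.

Section Multigraph.
Variables (T : finType) (m : T -> T -> nat).

Definition multigraph := (forall u v, m u v = m v u) /\ (forall v, m v v = 0).

Definition adj (u v : T) : bool := 0 < m u v.

Definition nbhd (v : T) : {set T} := [set u | adj v u].

Definition rho (v : T) : nat :=
  #|[set S : {set T} | (S \subset nbhd v) &&
      [exists u1, exists u2, [&& u1 != u2, S == [set u1; u2] & adj u1 u2]]]|.

(* large-dense: |N(v)| > 7k and rho(v) > |N(v)|(|N(v)|-1)/4
   (the latter written without division: 4 rho(v) > |N(v)|(|N(v)|-1)) *)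
Definition large_dense (k : nat) (v : T) : bool :=
  (7 * k < #|nbhd v|) && (#|nbhd v| * (#|nbhd v|).-1 < 4 * rho v).

Definition induces_P3 (v1 v2 v3 : T) : Prop :=
  [/\ [&& v1 != v2, v2 != v3 & v1 != v3],
      adj v1 v2, adj v2 v3 & ~~ adj v1 v3].

Definition is_clique (C : {set T}) : Prop :=
  forall u w, u \in C -> w \in C -> u != w -> m u w = 1.

Definition adj_in (C : {set T}) : rel T :=
  fun u w => [&& u \in C, w \in C & adj u w].

Definition is_connected (C : {set T}) : Prop :=
  forall u w, u \in C -> w \in C -> connect (adj_in C) u w.

Definition simple_cycle_in (C : {set T}) (s : seq T) : Prop :=
  match s with
  | [::] => False
  | x :: s' => [/\ 3 <= size s, uniq s, all (mem C) s &
                  path (adj_in C) x s' /\ adj_in C (last x s') x]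
  end.

(* acyclic: no pair of parallel edges (a 2-cycle) and no cycle of length >= 3 *)
Definition is_acyclic (C : {set T}) : Prop :=
  (forall u w, u \in C -> w \in C -> m u w <= 1) /\
  (forall s, ~ simple_cycle_in C s).

Definition is_tree (C : {set T}) : Prop := is_connected C /\ is_acyclic C.

Definition comp_minus (X : {set T}) (x : T) : {set T} :=
  [set y | connect (adj_in (~: X)) x y].

Definition feasible (k : nat) (X : {set T}) : Prop :=
  #|X| <= k /\
  forall x, x \notin X ->
    is_clique (comp_minus X x) \/ is_tree (comp_minus X x).

End Multigraph.

(* Main.v *)
Require Import Defs.
From mathcomp Require Import all_boot.
From mathcomp Require Import zify.

Theorem mainTheorem11 (T : finType) (m : T -> T -> nat) (k : nat)
  (X : {set T}) (v1 v2 v3 : T) :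
  multigraph m ->
  feasible m k X ->
  large_dense m k v1 -> large_dense m k v2 -> large_dense m k v3 ->
  induces_P3 m v1 v2 v3 ->
  X :&: [set v1; v2; v3] != set0.
Proof.
move=> [msym mloop] [cardX feas] _ ld2 _ [/and3P [n12 n23 n13] a12 a23 na13].
apply/negP => /eqP XP.
have notin : forall v, v \in [set v1; v2; v3] -> v \notin X.
  move=> v hv; apply/negP => hX.
  have : v \in X :&: [set v1; v2; v3] by rewrite inE hX hv.
  by rewrite XP inE.
have nX1 : v1 \notin X by apply: notin; rewrite !inE eqxx.
have nX2 : v2 \notin X by apply: notin; rewrite !inE eqxx orbT.
have nX3 : v3 \notin X by apply: notin; rewrite !inE eqxx !orbT.
set C := comp_minus m X v2.
have adjC : forall u, u \notin X -> adj m v2 u -> u \in C.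
  move=> u hu hadj; rewrite inE; apply: connect1.
  by rewrite /adj_in !inE nX2 hu hadj.
have adjsym : forall u w, adj m u w = adj m w u.
  by move=> u w; rewrite /adj msym.
have c1 : v1 \in C by apply: adjC => //; rewrite adjsym.
have c3 : v3 \in C by apply: adjC.
have c2 : v2 \in C by rewrite inE connect0.
have [cl|[_ [_ acyc]]] := feas v2 nX2.
  have := cl v1 v3 c1 c3 n13.
  by move: na13; rewrite /adj; case: (m v1 v3).
have tri : forall u1 u2, adj m v2 u1 -> adj m v2 u2 -> u1 != u2 ->
    adj m u1 u2 -> (u1 \in X) || (u2 \in X).
  move=> u1 u2 h1 h2 n hu; apply/negPn/negP; rewrite negb_or => /andP [x1 x2].
  have d1 : u1 \in C by apply: adjC.
  have d2 : u2 \in C by apply: adjC.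
  have nv : forall u, adj m v2 u -> v2 != u.
    by move=> u; apply: contraTneq => <-; rewrite /adj mloop.
  apply: (acyc [:: v2; u1; u2]); split => //=.
  - by rewrite !inE negb_or nv // nv // n.
  - by rewrite d1 d2 c2.
  - by rewrite /adj_in c2 d1 d2 h1 hu /= adjsym h2.
set N := nbhd m v2.
have sub : [set S : {set T} | (S \subset N) &&
      [exists u1, exists u2, [&& u1 != u2, S == [set u1; u2] & adj m u1 u2]]]
    \subset [set [set p.1; p.2] | p in setX X N].
  apply/subsetP => S; rewrite inE => /andP [sN /existsP [u1 /existsP [u2 /and3P [n /eqP eS a]]]].
  rewrite eS in sN *.
  have i1 : u1 \in N by apply: (subsetP sN); exact: set21.
  have i2 : u2 \in N by apply: (subsetP sN); exact: set22.
  move: (i1) (i2); rewrite !inE => j1 j2.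
  case/orP: (tri u1 u2 j1 j2 n a) => hx.
    by apply/imsetP; exists (u1, u2); rewrite ?in_setX ?hx ?i2.
  by apply/imsetP; exists (u2, u1); rewrite ?in_setX ?hx ?i1 //= setUC.
have rb : rho m v2 <= #|X| * #|N|.
  rewrite /rho -cardsX; apply: leq_trans (subset_leq_card sub) _.
  exact: leq_imset_card.
move: ld2; rewrite /large_dense -/N => /andP [h1 h2].
have e1 : #|X| * #|N| <= k * #|N| by apply: leq_mul.
move: h1 h2 rb e1; set d := #|N|; set r := rho m v2 => h1 h2 rb e1.
have h4 : 4 * k < d by apply: leq_ltn_trans h1; exact: leq_mul.
have h5 : 4 * k <= d.-1 by rewrite -ltnS prednK // (leq_ltn_trans _ h4).
have e2 : d * (4 * k) <= d * d.-1 by apply: leq_mul.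
have e3 : k * d * 4 = d * (4 * k) by rewrite mulnC mulnA [RHS]mulnC.
have e4 : 4 * r <= 4 * (k * d) by rewrite leq_mul2l; exact: leq_trans rb e1.
rewrite [4 * (k * d)]mulnC e3 in e4.
by move: (leq_trans e4 e2); rewrite leqNgt h2.
Qed.
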